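(* Let $n\ge4$ and let $G$ be an almost simple primitive permutation group with socle $G_0$ equal to $\mathrm{PSp}_n(q)$, $\mathrm{PSU}_n(q)$, or $\mathrm{P\Omega}^\epsilon_n(q)$ with $(n,\epsilon)\ne(4,-)$, acting on the set $X$ of all non-degenerate $2$-dimensional subspaces of the natural module $V$, where in the orthogonal case $X$ consists of the non-degenerate $2$-spaces of type $\mathrm{O}_2^+$. Then $\mathrm{diam}(X,G)\ge 3$.
   Context: The natural module carries the non-degenerate alternating, hermitian, or quadratic form preserved by $G_0$; a subspace $W$ is non-degenerate if $W\cap W^\perp=0$. A non-degenerate $2$-space of an orthogonal space is of type $\mathrm{O}_2^+$ if it contains a non-zero singular vector, and of type $\mathrm{O}_2^-$ otherwise. An (undirected) orbital graph of $(X,G)$ has as edge set a single $G$-orbit on unordered $2$-subsets of $X$; $\mathrm{diam}(X,G)$ is the maximum diameter of such graphs. *)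

(* Defs.v *)
From mathcomp Require Import all_boot all_order all_algebra all_fingroup all_solvable all_field.
Set Implicit Arguments. Unset Strict Implicit. Unset Printing Implicit Defensive.
Import GRing.Theory.
Local Open Scope ring_scope.

Section Orbital.
Variable T : finType.

Definition orbital_edge (G : {set {perm T}}) (X : {set T}) (x y : T) : rel T :=
  fun u w => [&& u \in X, w \in X & [exists g in G, [set u; w] == [set g x; g y]]].

(* A graph on vertex set X with edge relation E has diameter >= d
   (diameter +oo if disconnected): some two vertices are at distance >= d. *)
Definition graph_diam_ge (X : {set T}) (E : rel T) (d : nat) : Prop :=
  exists u w, [/\ u \in X, w \in X &
    forall p : seq T, path E u p -> last u p = w -> (d <= size p)%N].

(* diam(X,G) >= d : the maximum of the diameters of the orbital graphs is >= d,
   i.e. some orbital graph has diameter >= d. *)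
Definition orbital_diam_ge (G : {set {perm T}}) (X : {set T}) (d : nat) : Prop :=
  exists x y, [/\ x \in X, y \in X, x != y &
    graph_diam_ge X (orbital_edge G X x y) d].
End Orbital.

Inductive form_kind := Symp | Unit | Orth.
Definition form_kind_eqb (a b : form_kind) : bool :=
  match a, b with Symp, Symp | Unit, Unit | Orth, Orth => true | _, _ => false end.

Section Formed.
Variables (F : finFieldType) (n : nat).
Local Notation V := 'rV[F]_n.

Definition is_subspace (W : {set V}) : bool :=
  (0 \in W) && [forall a : F, forall u in W, forall v in W, a *: u + v \in W].

Definition is_2space (W : {set V}) : bool := is_subspace W && (#|W| == #|F| ^ 2)%N.

Variables (k : form_kind) (sigma : F -> F) (B : V -> V -> F) (Q : V -> F).

Definition bilinear_l : Prop :=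
  forall a u v w, B (a *: u + v) w = a * B u w + B v w.
Definition nondeg_form : Prop := forall u, (forall v, B u v = 0) -> u = 0.

Definition formed_space : Prop :=
  match k with
  | Symp => bilinear_l /\ (forall u v, B u v = - B v u) /\
            (forall v, B v v = 0) /\ nondeg_form
  | Unit =>
            (forall a b, sigma (a + b) = sigma a + sigma b) /\
            (forall a b, sigma (a * b) = sigma a * sigma b) /\ sigma 1 = 1 /\
            (forall a, sigma (sigma a) = a) /\ (exists a, sigma a <> a) /\
            bilinear_l /\ (forall u v, B u v = sigma (B v u)) /\ nondeg_form
  | Orth =>
            (forall a v, Q (a *: v) = a ^+ 2 * Q v) /\
            (forall u v, B u v = Q (u + v) - Q u - Q v) /\
            bilinear_l /\ (forall u v, B u v = B v u) /\ nondeg_form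
  end.

Definition nondeg_sub (W : {set V}) : bool :=
  [forall u in W, [forall v in W, B u v == 0] ==> (u == 0)].

Definition has_singular (W : {set V}) : bool := [exists v in W, (v != 0) && (Q v == 0)].

Definition totally_singular (W : {set V}) : bool := [forall v in W, Q v == 0].

(* the set X of points: non-degenerate 2-spaces (of type O_2^+ in the
   orthogonal case) *)
Definition Xpts : {set {set V}} :=
  [set W | [&& is_2space W, nondeg_sub W & form_kind_eqb k Orth ==> has_singular W]].

Definition field_aut (tau : {ffun F -> F}) : bool :=
  [forall a, forall b, (tau (a + b) == tau a + tau b) && (tau (a * b) == tau a * tau b)]
  && (tau 1 == 1).

Definition additive_perm (g : {perm V}) : bool :=
  [forall u, forall v, g (u + v) == g u + g v].

Definition semisim (g : {perm V}) : bool :=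
  [exists tau : {ffun F -> F},
    [&& field_aut tau, additive_perm g,
        [forall a : F, forall u, g (a *: u) == tau a *: g u] &
        [exists lam : F, (lam != 0) &&
           (if form_kind_eqb k Orth then [forall u, Q (g u) == lam * tau (Q u)]
            else [forall u, forall v, B (g u) (g v) == lam * tau (B u v)])]]].

Definition linear_perm (g : {perm V}) : bool :=
  [forall a : F, forall u, forall v, g (a *: u + v) == a *: g u + g v].

Definition isom_perm (g : {perm V}) : bool :=
  linear_perm g &&
  (if form_kind_eqb k Orth then [forall u, Q (g u) == Q u]
   else [forall u, forall v, B (g u) (g v) == B u v]).

Definition Isom : {set {perm V}} := [set g | isom_perm g].

(* the quasisimple group whose image is the socle:
   Sp_n(q), SU_n(q), or Omega_n(q) = derived subgroup of O_n(q). *)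
Definition Qsimple : {set {perm V}} :=
  match k with
  | Symp => Isom
  | Unit => Isom :&: [set g : {perm V} | \det (lin1_mx (fun v : V => g v)) == 1]
  | Orth => [~: <<Isom>>, <<Isom>>]%g
  end.

Definition Gam : {set {perm V}} := [set g | semisim g].

(* the permutation of X induced by g (identity outside X) *)
Definition indperm (g : {perm V}) : {perm {set V}} :=
  restr_perm Xpts (actperm ('P^*)%act g).

Definition img (A : {set {perm V}}) : {set {perm {set V}}} :=
  <<[set indperm g | g in A]>>%g.

Definition PGam : {set {perm {set V}}} := img Gam.
Definition Socle0 : {set {perm {set V}}} := img Qsimple.
End Formed.

(* Main.v *)
Require Import Defs.
From mathcomp Require Import all_boot all_order all_algebra all_fingroup all_solvable all_field.
From mathcomp Require Import zify ring.
Set Implicit Arguments. Unset Strict Implicit. Unset Printing Implicit Defensive.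
Import GRing.Theory.
Local Open Scope ring_scope.

Lemma dbl0 (M : zmodType) (x : M) : x + x = x -> x = 0.
Proof. by move=> h; apply: (addrI x); rewrite h addr0. Qed.

Section LA.
Variables (F : finFieldType) (n : nat) (B : 'rV[F]_n -> 'rV[F]_n -> F).
Local Notation V := 'rV[F]_n.
Hypothesis hlin : bilinear_l B.
Hypothesis hsym0 : forall u v, B u v = 0 -> B v u = 0.
Hypothesis hnd : nondeg_form B.

Lemma B0l c : B 0 c = 0.
Proof. by apply: dbl0; have := hlin 1 0 0 c; rewrite scale1r addr0 mul1r. Qed.
Lemma BDl x y c : B (x + y) c = B x c + B y c.
Proof. by rewrite -{1}(scale1r x) hlin mul1r. Qed.
Lemma BZl a x c : B (a *: x) c = a * B x c.
Proof. by rewrite -(addr0 (a *: x)) hlin B0l addr0. Qed.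
Lemma BNl x c : B (- x) c = - B x c.
Proof. by rewrite -scaleN1r BZl mulN1r. Qed.
Lemma Bnz u v : B u v != 0 -> B v u != 0.
Proof. by apply: contra=> /eqP /hsym0 ->. Qed.

Lemma Bsum (I : finType) (f : I -> V) c : B (\sum_i f i) c = \sum_i B (f i) c.
Proof. exact: (big_morph (fun x => B x c) (fun x y => BDl x y c) (B0l c)). Qed.

Lemma nd_witness u : u != 0 -> exists v, B v u != 0.
Proof.
move=> u0; have [/existsP[v hv]|] := boolP [exists v, B u v != 0].
  by exists v; apply: Bnz.
move/existsPn=> h; case/eqP: u0; apply: hnd => v; apply/eqP; move: (h v); by rewrite negbK.
Qed.

Definition cmx (L : seq V) : 'M[F]_(n, size L) :=
  \matrix_(i < n, j < size L) B (delta_mx 0 i) (nth 0 L j).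

Lemma cmxE (L : seq V) v j : (v *m cmx L) 0 j = B v (nth 0 L j).
Proof.
rewrite mxE [in RHS](row_sum_delta v) Bsum; apply: eq_bigr => i _.
by rewrite mxE BZl.
Qed.

Lemma DLmx (L : seq V) p (A : 'M[F]_(p, n)) : (size L + \rank A < n)%N ->
  exists v : V, (forall l, l \in L -> B v l = 0) /\ ~~ (v <= A)%MS.
Proof.
move=> hlt.
have : ~~ (kermx (cmx L) <= A)%MS.
  apply: contraL hlt => /mxrankS; rewrite mxrank_ker -leqNgt => h.
  have := rank_leq_col (cmx L); lia.
case/row_subPn=> i hi; exists (row i (kermx (cmx L))); split=> // l lL.
have : (row i (kermx (cmx L)) <= kermx (cmx L))%MS by apply: row_sub.
move/sub_kermxP=> /matrixP /(_ 0 (Ordinal (eqbRL (index_mem l L) lL))).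
by rewrite cmxE /= nth_index // mxE.
Qed.

Lemma DL0 (L : seq V) : (size L < n)%N -> exists v : V, (forall l, l \in L -> B v l = 0) /\ v != 0.
Proof.
move=> h; have [|v [hv hv0]] := @DLmx L 1 0; first by rewrite mxrank0 addn0.
by exists v; split=> //; apply: contra hv0 => /eqP ->; apply: sub0mx.
Qed.

Lemma DL1 (L : seq V) (a : V) : ((size L).+1 < n)%N -> exists v : V,
  (forall l, l \in L -> B v l = 0) /\ forall c, v != c *: a.
Proof.
move=> h; have [|v [hv hv0]] := @DLmx L 1 a.
  by have := rank_leq_row a; lia.
exists v; split=> // c; apply: contra hv0 => /eqP ->; apply/sub_rVP; by exists c.
Qed.
End LA.

Section GroupPart.
Variables (F : finFieldType) (n : nat) (k : form_kind) (B : 'rV[F]_n -> 'rV[F]_n -> F) (Q : 'rV[F]_n -> F).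
Local Notation V := 'rV[F]_n.
Local Notation X := (Xpts k B Q).

Definition iso (z : V) : bool := if form_kind_eqb k Orth then Q z == 0 else B z z == 0.
Definition Rr (a b : {set V}) : bool := [exists z, [&& z \in a, z \in b, z != 0 & iso z]].


Lemma semisim_R (g : {perm V}) a b : semisim k B Q g -> Rr a b -> Rr (g @: a) (g @: b).
Proof.
case/existsP=> tau /and4P[ftau /forallP addg _ /existsP[lam /andP[lam0 Hlam]]].
case/existsP=> z /and4P[za zb z0 iz]; apply/existsP; exists (g z).
rewrite !imset_f //=.
have tau0 : tau 0 = 0.
  move: ftau=> /andP[/forallP /(_ 0) /forallP /(_ 0) /andP[/eqP h _] _].
  by apply: dbl0; rewrite -h addr0.
have g0 : g 0 = 0.
  have /eqP h := forallP (addg 0) 0; rewrite addr0 in h.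
  by apply: dbl0; rewrite -h.
apply/andP; split.
  apply/eqP=> gz; move/eqP: z0; apply; apply: (@perm_inj _ g); by rewrite gz g0.
move: iz Hlam; rewrite /iso; case: (form_kind_eqb k Orth).
  by move=> /eqP qz /forallP /(_ z) /eqP ->; rewrite qz tau0 mulr0.
by move=> /eqP bz /forallP /(_ z) /forallP /(_ z) /eqP ->; rewrite bz tau0 mulr0.
Qed.

Definition Hset : {set {perm {set V}}} :=
  [set h : {perm {set V}} | [forall a in X, (h a \in X) && [forall b in X, Rr a b ==> Rr (h a) (h b)]]].

Lemma Hset_group : group_set Hset.
Proof.
apply/group_setP; split.
  rewrite inE; apply/forall_inP=> a aX; rewrite perm1 aX /=.
  by apply/forall_inP=> b _; rewrite !perm1 implybb.
move=> x y; rewrite !inE => /forall_inP Hx /forall_inP Hy.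
apply/forall_inP=> a aX; rewrite !permM.
have /andP[xaX /forall_inP Hxa] := Hx a aX.
have /andP[yaX /forall_inP Hya] := Hy _ xaX.
rewrite yaX /=; apply/forall_inP=> b bX; apply/implyP=> Rab.
have /andP[xbX _] := Hx b bX.
by rewrite permM; move/implyP: (Hya _ xbX); apply; move/implyP: (Hxa _ bX); apply.
Qed.

Canonical Hgroup := Group Hset_group.

Lemma indperm_H g : g \in Gam k B Q -> indperm k B Q g \in Hset.
Proof.
rewrite inE => sg; rewrite inE /indperm.
set p := actperm _ g.
have [pN|pN] := boolP (p \in ('N(X | 'P))%g); last first.
  rewrite triv_restr_perm //; apply/forall_inP=> a aX; rewrite perm1 aX /=.
  by apply/forall_inP=> b _; rewrite !perm1 implybb.
have pE : forall a, a \in X -> restr_perm X p a = g @: a.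
  move=> a aX; rewrite restr_permE // /p actpermE /= setactE.
  by [].
apply/forall_inP=> a aX; rewrite pE //.
have -> : g @: a \in X by rewrite -pE // restr_permE //; have := astabs_act a pN; rewrite /= apermE => ->.
apply/forall_inP=> b bX; rewrite pE //; apply/implyP; exact: semisim_R.
Qed.

Lemma PGam_H : PGam k B Q \subset Hset.
Proof.
rewrite /PGam /img gen_subG; apply/subsetP=> h /imsetP[g gG ->]; exact: indperm_H.
Qed.

Lemma Rr_sym a b : Rr a b -> Rr b a.
Proof.
by case/existsP=> z /and4P[za zb z0 iz]; apply/existsP; exists z; rewrite za zb z0.
Qed.

Lemma set2_eq (T : finType) (a b c d : T) :
  [set a; b] = [set c; d] -> (a = c /\ b = d) \/ (a = d /\ b = c).
Proof.
move=> E.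
have ha : a \in [set c; d] by rewrite -E setU11.
have hb : b \in [set c; d] by rewrite -E setU1r ?set11.
have hc : c \in [set a; b] by rewrite E setU11.
have hd : d \in [set a; b] by rewrite E setU1r ?set11.
move: ha hb hc hd; rewrite !inE.
have [->|ac] := eqVneq a c.
  move=> _ hb _ /orP[/eqP dc|/eqP ->]; last by left.
  by subst d; move: hb; rewrite orbb => /eqP ->; left.
move=> /= /eqP ad _ /= /eqP cb _; right; split=> //.
Qed.

Lemma edge_R (G : {set {perm {set V}}}) x y a b :
  G \subset Hset -> x \in X -> y \in X -> Rr x y ->
  orbital_edge G X x y a b -> Rr a b.
Proof.
move=> sGH xX yX Rxy /and3P[aX bX /exists_inP[g gG /eqP E]].
have /[!inE] /forall_inP Hg := subsetP sGH g gG.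
have /andP[_ /forall_inP Hx] := Hg x xX.
have Rg := implyP (Hx y yX) Rxy.
by case: (set2_eq E)=> [][-> ->] //; apply: Rr_sym.
Qed.

Lemma diam_from (G : {set {perm {set V}}}) x y u w :
  G \subset Hset -> x \in X -> y \in X -> x != y -> Rr x y ->
  u \in X -> w \in X -> u != w -> ~~ Rr u w ->
  (forall v, v \in X -> Rr u v -> Rr v w -> False) -> orbital_diam_ge G X 3.
Proof.
move=> sGH xX yX xy Rxy uX wX uw nRuw noV.
exists x, y; split=> //; exists u, w; split=> // p.
have E := edge_R sGH xX yX Rxy.
case: p => [|v1 [|v2 [|v3 p]]] //=.
- by move=> _ eq; rewrite eq eqxx in uw.
- by rewrite andbT => /E Ruv eq; rewrite -eq Ruv in nRuw.
- case/and3P=> e1 /E R2 _ eq; have R1 := E _ _ e1.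
  by case/and3P: e1 => _ v1X _; case: (noV v1 v1X R1); rewrite -eq.
Qed.
End GroupPart.

Section Span.
Variables (F : finFieldType) (n : nat) (k : form_kind) (B : 'rV[F]_n -> 'rV[F]_n -> F) (Q : 'rV[F]_n -> F).
Local Notation V := 'rV[F]_n.
Local Notation X := (Xpts k B Q).
Hypothesis hlin : bilinear_l B.
Hypothesis hsym0 : forall u v, B u v = 0 -> B v u = 0.
Hypothesis hiso : forall z, iso k B Q z -> B z z = 0.

Definition span2 (a b : V) : {set V} := [set p.1 *: a + p.2 *: b | p in [set: F * F]].
Definition indep (a b : V) := forall x y : F, x *: a + y *: b = 0 -> x = 0 /\ y = 0.

Lemma mem_span2 a b x y : x *: a + y *: b \in span2 a b.
Proof. by apply/imsetP; exists (x, y); rewrite ?inE. Qed.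

Lemma span2P a b t : t \in span2 a b -> exists x y, t = x *: a + y *: b.
Proof. by case/imsetP=> [[x y] _ ->]; exists x, y. Qed.

Lemma span2_sub a b : is_subspace (span2 a b).
Proof.
apply/andP; split.
  by have := mem_span2 a b 0 0; rewrite !scale0r addr0.
apply/forallP=> c; apply/forall_inP=> u /span2P[x [y ->]]; apply/forall_inP=> v /span2P[z [w ->]].
have -> : c *: (x *: a + y *: b) + (z *: a + w *: b) = (c * x + z) *: a + (c * y + w) *: b.
  by rewrite !scalerDl !scalerDr !scalerA; rewrite addrACA.
exact: mem_span2.
Qed.

Lemma span2_card a b : indep a b -> #|span2 a b| = (#|F| ^ 2)%N.
Proof.
move=> ind; rewrite /span2 card_imset; first by rewrite cardsT card_prod expnS expn1.
move=> [x y] [z w] /= /eqP; rewrite -subr_eq0 => /eqP h.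
have [/eqP h1 /eqP h2] : x - z = 0 /\ y - w = 0.
  by apply: ind; rewrite !scalerBl -h; rewrite addrACA opprD.
by move: h1 h2; rewrite !subr_eq0 => /eqP -> /eqP ->.
Qed.

Lemma subsp_comb (W : {set V}) a b x y : is_subspace W -> a \in W -> b \in W ->
  x *: a + y *: b \in W.
Proof.
case/andP=> W0 /forallP WC aW bW.
have h1 : y *: b \in W by rewrite -[y *: b]addr0; apply: (forall_inP (forall_inP (WC y) b bW) 0 W0).
exact: (forall_inP (forall_inP (WC x) a aW) _ h1).
Qed.

Lemma span2_eq (W : {set V}) a b : is_2space W -> a \in W -> b \in W -> indep a b -> W = span2 a b.
Proof.
case/andP=> sW /eqP cW aW bW ind; apply/esym/eqP; rewrite eqEcard cW span2_card // leqnn andbT.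
by apply/subsetP=> t /span2P[x [y ->]]; apply: subsp_comb.
Qed.

Lemma span2_2space a b : indep a b -> is_2space (span2 a b).
Proof. by move=> ind; rewrite /is_2space span2_sub span2_card // eqxx. Qed.

Lemma hyp_indep e f : e != 0 -> iso k B Q e -> B f e != 0 -> indep e f.
Proof.
move=> e0 ie fe x y h.
have : B (x *: e + y *: f) e = 0 by rewrite h B0l.
rewrite BDl // !BZl // hiso // mulr0 add0r => /eqP; rewrite mulf_eq0 (negbTE fe) orbF => /eqP y0.
split=> //; move: h; rewrite y0 scale0r addr0 => /eqP; rewrite scaler_eq0 (negbTE e0) orbF.
by move/eqP.
Qed.

Lemma hyp_X e f : e != 0 -> iso k B Q e -> B f e != 0 -> span2 e f \in X.
Proof.
move=> e0 ie fe; have ind := hyp_indep e0 ie fe.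
rewrite inE span2_2space //=; apply/andP; split.
  have eS : e \in span2 e f by have := mem_span2 e f 1 0; rewrite scale1r scale0r addr0.
  have fS : f \in span2 e f by have := mem_span2 e f 0 1; rewrite scale1r scale0r add0r.
  apply/forall_inP=> u /span2P[x [y ->]]; apply/implyP=> /forall_inP h.
  have /eqP h1 := h e eS.
  have /eqP h2 := h f fS.
  have y0 : y = 0.
    move: h1; rewrite BDl // !BZl // hiso // mulr0 add0r => /eqP.
    by rewrite mulf_eq0 (negbTE fe) orbF => /eqP.
  move: h2; rewrite y0 scale0r addr0 BZl // => /eqP.
  rewrite mulf_eq0 (negbTE (Bnz hsym0 fe)) orbF => /eqP ->.
  by rewrite scale0r.
apply/implyP=> hO; apply/existsP; exists e.
rewrite e0 /=; move: ie; rewrite /iso hO => ->.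
by have := mem_span2 e f 1 0; rewrite scale1r scale0r addr0 => ->.
Qed.
End Span.

Section NoPath.
Variables (F : finFieldType) (n : nat) (k : form_kind) (B : 'rV[F]_n -> 'rV[F]_n -> F) (Q : 'rV[F]_n -> F).
Local Notation V := 'rV[F]_n.
Local Notation X := (Xpts k B Q).
Hypothesis hlin : bilinear_l B.
Hypothesis hsym0 : forall u v, B u v = 0 -> B v u = 0.
Hypothesis hiso : forall z, iso k B Q z -> B z z = 0.

Definition perp (u w : {set V}) := forall s t, s \in u -> t \in w -> B s t = 0.

Lemma perp_meet u w z : nondeg_sub B u -> perp u w -> z \in u -> z \in w -> z = 0.
Proof.
move=> /forall_inP nd pp zu zw; apply/eqP; apply: (implyP (nd z zu)).
by apply/forall_inP=> t tu; apply/eqP; apply: hsym0; apply: pp.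
Qed.

Lemma no_Rr u w : nondeg_sub B u -> perp u w -> ~~ Rr k B Q u w.
Proof.
move=> nd pp; apply/negP=> /existsP[z /and4P[zu zw z0 _]].
by rewrite (perp_meet nd pp zu zw) eqxx in z0.
Qed.

Lemma no_path u w v : is_2space u -> nondeg_sub B u -> perp u w -> v \in X ->
  Rr k B Q u v -> Rr k B Q v w -> False.
Proof.
move=> u2 nd pp; rewrite inE => /and3P[v2 ndv _].
case/existsP=> z1 /and4P[z1u z1v z10 iz1]; case/existsP=> z2 /and4P[z2v z2w z20 iz2].
have b12 : B z1 z2 = 0 by apply: pp.
have b21 := hsym0 b12.
have ind : indep z1 z2.
  move=> x y h.
  have [y0|y0] := eqVneq y 0.
    split=> //; move: h; rewrite y0 scale0r addr0 => /eqP; rewrite scaler_eq0 (negbTE z10) orbF.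
    by move/eqP.
  exfalso; move/eqP: z20; apply.
  apply: (perp_meet nd pp _ z2w).
  have -> : z2 = (- (y^-1 * x)) *: z1 + 0 *: z1.
    have h' : y *: z2 = - (x *: z1) by apply/eqP; rewrite -addr_eq0 addrC h.
    by rewrite scale0r addr0 scaleNr -scalerA -scalerN -h' scalerA mulVf // scale1r.
  by apply: subsp_comb=> //; case/andP: u2.
have vE := span2_eq v2 z1v z2v ind.
suff : z1 == 0 by rewrite (negbTE z10).
apply: (implyP (forall_inP ndv z1 z1v)).
apply/forall_inP=> t; rewrite vE => /span2P[x [y ->]]; apply/eqP; apply: hsym0.
by rewrite BDl // !BZl // hiso // b21 !mulr0 addr0.
Qed.
End NoPath.

Section Assemble.
Variables (F : finFieldType) (n : nat) (k : form_kind) (B : 'rV[F]_n -> 'rV[F]_n -> F) (Q : 'rV[F]_n -> F).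
Local Notation V := 'rV[F]_n.
Local Notation X := (Xpts k B Q).
Hypothesis hlin : bilinear_l B.
Hypothesis hsym0 : forall u v, B u v = 0 -> B v u = 0.
Hypothesis hnd : nondeg_form B.
Hypothesis hiso : forall z, iso k B Q z -> B z z = 0.

Lemma assemble (G : {set {perm {set V}}}) e1 f1 e2 :
  G \subset Hset k B Q ->
  e1 != 0 -> iso k B Q e1 -> B f1 e1 != 0 -> e2 != 0 -> iso k B Q e2 ->
  B e2 e1 = 0 -> B e2 f1 = 0 -> orbital_diam_ge G X 3.
Proof.
move=> sGH e10 ie1 fe1 e20 ie2 b21 b2f.
have [v hv] := nd_witness hsym0 hnd e20.
set c := B f1 e1; set d := B e1 f1.
have d0 : d != 0 by apply: Bnz.
set be := B v e1 / c; set al := (B v f1 - be * B f1 f1) / d.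
set f2 := v + (- al) *: e1 + (- be) *: f1.
have b12 := hsym0 b21; have bf2 := hsym0 b2f.
have BD := BDl hlin; have BZ := BZl hlin.
have f2e1 : B f2 e1 = 0.
  by rewrite /f2 !BD !BZ hiso // mulr0 addr0 -/c /be mulNr divfK // subrr.
have f2f1 : B f2 f1 = 0.
  rewrite /f2 !BD !BZ -/d /al mulNr divfK //.
  by ring.
have f2e2 : B f2 e2 != 0.
  by rewrite /f2 !BD !BZ b12 bf2 !mulr0 !addr0.
set u := span2 e1 f1; set w := span2 e2 f2.
have uX : u \in X by apply: hyp_X.
have wX : w \in X by apply: hyp_X.
have uX' := uX; rewrite inE in uX'; case/and3P: uX' => u2 ndu _.
have pp : perp B u w.
  move=> s t /span2P[x [y ->]] /span2P[z [z' ->]].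
  have t1 : B (z *: e2 + z' *: f2) e1 = 0 by rewrite BD !BZ b21 f2e1 !mulr0 addr0.
  have t2 : B (z *: e2 + z' *: f2) f1 = 0 by rewrite BD !BZ b2f f2f1 !mulr0 addr0.
  by rewrite BD !BZ (hsym0 t1) (hsym0 t2) !mulr0 addr0.
have e2w : e2 \in w by have := mem_span2 e2 f2 1 0; rewrite scale1r scale0r addr0.
have e1u : e1 \in u by have := mem_span2 e1 f1 1 0; rewrite scale1r scale0r addr0.
set y := span2 e1 (f1 + e2).
have fe12 : B (f1 + e2) e1 != 0 by rewrite BD b21 addr0.
have yX : y \in X by apply: hyp_X.
apply: (@diam_from _ _ k B Q G u y u w) => //.
- apply/eqP=> uy.
  have : e2 \in u.
    have := mem_span2 e1 (f1 + e2) 0 1; rewrite scale0r add0r scale1r -/y -uy => h.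
    have f1u : f1 \in u by have := mem_span2 e1 f1 0 1; rewrite scale0r add0r scale1r.
    have := subsp_comb 1 (-1) (andP u2).1 h f1u.
    by rewrite scale1r scaleN1r addrC addKr.
  by move=> e2u; move: e20; rewrite (perp_meet hsym0 ndu pp e2u e2w) eqxx.
- rewrite /Rr; apply/existsP; exists e1; rewrite e1u e10 ie1 /= andbT.
  by have := mem_span2 e1 (f1 + e2) 1 0; rewrite scale1r scale0r addr0.
- apply/eqP=> uw; move: e10.
  by rewrite (perp_meet hsym0 ndu pp e1u) ?eqxx // -uw.
- exact: no_Rr.
- by move=> v' vX h1 h2; apply: (no_path hlin hsym0 hiso u2 ndu pp vX h1 h2).
Qed.
End Assemble.

Section Fibre.
Variable F : finFieldType.
Variable f : F -> F.
Hypothesis fM : forall x y, f (x * y) = f x * f y.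
Hypothesis fU : forall x, x != 0 -> f x != 0.
Let U := [set x : F | x != 0].

Lemma fibre_card : #|U| = muln #|[set x in U | f x == 1]| #|f @: U|.
Proof.
rewrite -sum1_card (partition_big_imset f) /= mulnC -sum_nat_const.
apply: eq_bigr=> y /imsetP[x0 x0U ->].
rewrite sum1dep_card.
have x00 : x0 != 0 by rewrite inE in x0U.
rewrite -[RHS](card_imset _ (mulfI x00)); apply: eq_card=> x; rewrite !inE.
apply/idP/imsetP.
  case/andP=> x0' /eqP fx; exists (x0^-1 * x); last by rewrite mulrA divff // mul1r.
  rewrite !inE mulf_neq0 ?invr_eq0 //=; apply/eqP; apply: (mulfI (fU x00)).
  by rewrite -fM mulrA divff // mul1r fx mulr1.
case=> z; rewrite !inE => /andP[z0 /eqP fz] ->.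
by rewrite mulf_neq0 //= fM fz mulr1.
Qed.
End Fibre.

Section Norm.
Variables (F : finFieldType) (s : F -> F).
Hypothesis sD : forall a b, s (a + b) = s a + s b.
Hypothesis sM : forall a b, s (a * b) = s a * s b.
Hypothesis s1 : s 1 = 1.
Hypothesis ss : forall a, s (s a) = a.
Hypothesis snt : exists a, s a <> a.

Lemma s0 : s 0 = 0.
Proof. by apply: dbl0; rewrite -sD addr0. Qed.
Lemma snz x : x != 0 -> s x != 0.
Proof. by apply: contra => /eqP h; rewrite -(ss x) h s0. Qed.
Lemma sV x : s (x^-1) = (s x)^-1.
Proof.
have [->|x0] := eqVneq x 0; first by rewrite invr0 s0 invr0.
apply: (mulfI (snz x0)); rewrite -sM divff // s1 divff //; exact: snz.
Qed.

Let U := [set x : F | x != 0].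
Let F0s := [set x in U | s x == x].
Let K := [set x in U | x * s x == 1].

Lemma norm_onto c : c != 0 -> s c = c -> exists x, x * s x = c.
Proof.
move=> c0 sc.
have psiM : forall x y, (x * y) / s (x * y) = (x / s x) * (y / s y).
  by move=> x y; rewrite sM invfM mulrACA.
have psiU : forall x, x != 0 -> x / s x != 0.
  by move=> x x0; rewrite mulf_neq0 ?invr_eq0 ?snz.
have NM : forall x y, (x * y) * s (x * y) = (x * s x) * (y * s y).
  by move=> x y; rewrite sM mulrACA.
have NU : forall x, x != 0 -> x * s x != 0 by move=> x x0; rewrite mulf_neq0 ?snz.
have h1 := fibre_card psiM psiU.
have h2 := fibre_card NM NU.
have E1 : [set x in U | x / s x == 1] = F0s.
  apply/setP=> x; rewrite !inE; apply/andP/andP=> -[x0 h]; split=> //.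
    by rewrite -(divr1_eq (eqP h)).
  by rewrite (eqP h) divff // snz.
have E2 : (fun x => x / s x) @: U = K.
  apply/setP=> l; apply/imsetP/idP.
    case=> x; rewrite !inE => x0 ->; rewrite psiU //=.
    rewrite sM sV ss; apply/eqP; field; rewrite ?snz // ?x0 //.
  rewrite !inE => /andP[l0 /eqP hl].
  have key : forall a, (a + l * s a) = l * s (a + l * s a).
    by move=> a; rewrite sD sM ss mulrDr mulrA hl mul1r addrC.
  have [a a0] : exists a, a + l * s a != 0.
    case: snt => t st.
    have [h|h] := eqVneq (1 + l * s 1) 0; last by exists 1.
    exists t; apply/eqP=> ht; apply: st.
    move: h; rewrite s1 mulr1 => /eqP; rewrite addr_eq0 => /eqP hl1.
    have lN : l = -1 by rewrite hl1 opprK.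
    by move/eqP: ht; rewrite lN mulN1r subr_eq0 => /eqP <-.
  exists (a + l * s a); first by rewrite inE.
  rewrite {1}key mulfK //; apply: snz; exact: a0.
have E3 : [set x in U | x * s x == 1] = K by [].
rewrite E1 E2 in h1; rewrite E3 in h2.
have K0 : (0 < #|K|)%N by apply/card_gt0P; exists 1; rewrite !inE oner_eq0 s1 mulr1 eqxx.
have cN : #|(fun x => x * s x) @: U| = #|F0s|.
  by apply/eqP; rewrite -(eqn_pmul2l K0) -h2 h1 mulnC.
have : (fun x => x * s x) @: U == F0s.
  rewrite eqEcard cN leqnn andbT; apply/subsetP=> y /imsetP[x x0 ->].
  by move: x0; rewrite !inE => x0; rewrite NU //= sM ss mulrC.
move/eqP=> E; have : c \in F0s by rewrite !inE c0 sc eqxx.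
by rewrite -E => /imsetP[x _ ->]; exists x.
Qed.
End Norm.

Section Unitary.
Variables (F : finFieldType) (n : nat) (B : 'rV[F]_n -> 'rV[F]_n -> F) (s : F -> F).
Local Notation V := 'rV[F]_n.
Hypothesis sD : forall a b, s (a + b) = s a + s b.
Hypothesis sM : forall a b, s (a * b) = s a * s b.
Hypothesis s1 : s 1 = 1.
Hypothesis ss : forall a, s (s a) = a.
Hypothesis snt : exists a, s a <> a.
Hypothesis hlin : bilinear_l B.
Hypothesis herm : forall u v, B u v = s (B v u).
Hypothesis hn : (4 <= n)%N.

Lemma herm0 u v : B u v = 0 -> B v u = 0.
Proof. by move=> h; rewrite herm h (s0 sD). Qed.

Lemma unit_iso (L : seq V) : (size L <= 2)%N ->
  exists z, [/\ z != 0, B z z = 0 & forall l, l \in L -> B z l = 0].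
Proof.
move=> hL.
have [|v1 [hv1 v10]] := DL0 hlin (L := L); first by lia.
have [a0|a0] := eqVneq (B v1 v1) 0; first by exists v1.
have [|v2 [hv2 v20]] := DL0 hlin (L := v1 :: L); first by rewrite /=; lia.
have [b0|b0] := eqVneq (B v2 v2) 0.
  by exists v2; split=> // l lL; apply: hv2; rewrite inE lL orbT.
set al := B v1 v1; set be := B v2 v2.
have sN : forall x, s (- x) = - s x.
  by move=> x; apply/eqP; rewrite -addr_eq0 -sD addNr (s0 sD).
have sal : s al = al by rewrite /al -herm.
have sbe : s be = be by rewrite /be -herm.
have b21 : B v2 v1 = 0 by apply: hv2; rewrite inE eqxx.
have b12 : B v1 v2 = 0 by apply: herm0.
set c := - be / al.
have c0 : c != 0 by rewrite /c mulf_neq0 ?oppr_eq0 ?invr_eq0.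
have sc : s c = c by rewrite /c sM sN (sV sD sM s1 ss) sal sbe.
have [x hx] := norm_onto sD sM s1 ss snt c0 sc.
have BD := BDl hlin; have BZ := BZl hlin.
exists (x *: v1 + v2); split.
- apply/eqP=> z0.
  have : B (x *: v1 + v2) v1 = 0 by rewrite z0 (B0l hlin).
  rewrite BD BZ b21 addr0 -/al => /eqP; rewrite mulf_eq0 (negbTE a0) orbF => /eqP x0.
  by move: c0; rewrite -hx x0 mul0r eqxx.
- rewrite BD BZ (herm v1) (herm v2) BD BZ BD BZ b21 b12 -/al -/be mulr0 addr0 add0r.
  by rewrite sM sal sbe mulrA hx /c divfK // addNr.
- move=> l lL; rewrite BD BZ hv1 // hv2 ?mulr0 ?addr0 //.
  by rewrite inE lL orbT.
Qed.
End Unitary.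

Section Squares.
Variable F : finFieldType.

Lemma sq_root (x y : F) : x * x = y * y -> x = y \/ x = - y.
Proof.
move=> h; have : (x - y) * (x + y) = 0.
  have -> : (x - y) * (x + y) = x * x - y * y by ring.
  by rewrite h subrr.
move/eqP; rewrite mulf_eq0 subr_eq0 addr_eq0 => /orP[/eqP ->|/eqP ->].
  by left.
by right.
Qed.

Lemma sq_card : (#|F| < 2 * #|[set (x * x)%R | x : F]|)%N.
Proof.
set Sq := [set x * x | x : F].
pose r (t : F) := odflt 0 [pick x | x * x == t].
have rE : forall x : F, r (x * x) * r (x * x) = x * x.
  move=> x; rewrite /r; case: pickP => [t /eqP //|/(_ x)]; by rewrite eqxx.
pose phi (x : F) := (x * x, x == r (x * x)).
have phi_inj : injective phi.
  move=> x y [h1 h2]; rewrite -h1 in h2.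
  set t := r (x * x) in h2.
  have hx : x * x = t * t by rewrite rE.
  have hy : y * y = t * t by rewrite rE h1.
  have [xt|xt] := eqVneq x t.
    by move: h2; rewrite xt eqxx => /esym /eqP.
  move: h2; rewrite (negbTE xt) => /esym yt.
  case: (sq_root hx) => [/eqP|->]; first by rewrite (negbTE xt).
  case: (sq_root hy) => [/eqP|->]; first by rewrite yt.
  by [].
have sub : phi @: [set: F] \subset [set p in setX Sq [set: bool] | p != (0, false)].
  apply/subsetP=> p /imsetP[x _ ->]; rewrite !inE /phi /= andbT; apply/andP; split; first by apply/imsetP; exists x.
  apply/negP=> /eqP [x0 xr].
  have : x = 0 by apply/eqP; rewrite -[x == 0]orbb -mulf_eq0 x0.
  move=> x00; move: xr; rewrite x00 mulr0.
  have := rE 0; rewrite mulr0 => /eqP; rewrite mulf_eq0 orbb => /eqP ->.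
  by rewrite eqxx.
have hs := subset_leq_card sub; rewrite card_imset // cardsT in hs.
have E : [set p in setX Sq [set: bool] | p != (0, false)] = setX Sq [set: bool] :\ (0, false).
  by apply/setP=> p; rewrite !inE andbC.
rewrite E in hs.
have hD := cardsD1 (0 : F, false) (setX Sq [set: bool]).
have hin : (0 : F, false) \in setX Sq [set: bool].
  by rewrite !inE /= andbT; apply/imsetP; exists 0; rewrite ?inE ?mulr0.
rewrite hin cardsX cardsT card_bool in hD.
move: hD hs; rewrite [nat_of_bool true]/= mulnC => hD hs. by rewrite hD add1n ltnS.
Qed.

Lemma sq_pigeon (a b c : F) : a != 0 -> b != 0 ->
  exists x y, a * (x * x) + b * (y * y) + c = 0.
Proof.
move=> a0 b0; set Sq := [set x * x | x : F].
set S1 := (fun t => a * t) @: Sq; set S2 := (fun t => - c - b * t) @: Sq.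
have c1 : #|S1| = #|Sq| by apply: card_imset; apply: mulfI.
have c2 : #|S2| = #|Sq|.
  apply: card_imset=> u v /= /(addrI (- c)) /eqP; rewrite eqr_opp => /eqP.
  exact: mulfI.
have [w] : exists w, w \in S1 :&: S2.
  apply/set0Pn/negP=> /eqP e.
  have := cardsU S1 S2; rewrite e cards0 subn0 c1 c2 => h.
  have := max_card (mem (S1 :|: S2)); rewrite -/(#|S1 :|: S2|) h.
  have := sq_card; rewrite -/Sq => h1 h2; have := leq_ltn_trans h2 h1; by rewrite mul2n -addnn ltnn.
rewrite inE => /andP[/imsetP[u /imsetP[x _ ->] ->] /imsetP[v /imsetP[y _ ->] e]].
exists x, y; rewrite e; ring.
Qed.
End Squares.

Section Orthogonal.
Variables (F : finFieldType) (n : nat) (B : 'rV[F]_n -> 'rV[F]_n -> F) (Q : 'rV[F]_n -> F).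
Local Notation V := 'rV[F]_n.
Hypothesis hQZ : forall a v, Q (a *: v) = a ^+ 2 * Q v.
Hypothesis hpol : forall u v, B u v = Q (u + v) - Q u - Q v.
Hypothesis hlin : bilinear_l B.
Hypothesis hsymm : forall u v, B u v = B v u.
Hypothesis hn : (5 <= n)%N.

Lemma QD u v : Q (u + v) = Q u + Q v + B u v.
Proof. by rewrite hpol; ring. Qed.

Lemma Bvv v : B v v = 2 * Q v.
Proof.
rewrite hpol; have -> : v + v = 2 *: v by rewrite scalerDl scale1r.
by rewrite hQZ; ring.
Qed.

Lemma orth_iso (L : seq V) : (size L <= 2)%N ->
  exists z, [/\ z != 0, Q z = 0 & forall l, l \in L -> B z l = 0].
Proof.
move=> hL.
have BD := BDl hlin; have BZ := BZl hlin.
have [v1 [hv1 v10]] := DL0 hlin (L := L) ltac:(lia).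
have [a0|a0] := eqVneq (Q v1) 0; first by exists v1.
have [two0|two0] := eqVneq (2 : F) 0.
  have [v2 [hv2 v2n]] := DL1 hlin (L := v1 :: L) v1 ltac:(rewrite /=; lia).
  have sqinj : injective (fun x : F => x * x).
    move=> x y /= h; case: (sq_root h) => // ->.
    apply/eqP; rewrite eq_sym -addr_eq0; have -> : y + y = 2 * y by ring.
    by rewrite two0 mul0r.
  have [g gK1 gK2] := injF_bij sqinj.
  set x := g (- Q v2 / Q v1).
  have hx : x * x = - Q v2 / Q v1 by rewrite /x gK2.
  have b12 : B v1 v2 = 0 by rewrite hsymm; apply: hv2; rewrite inE eqxx.
  exists (x *: v1 + v2); split.
  - apply/eqP=> z0; move/eqP: (v2n (- x)); apply.
    by rewrite scaleNr; apply/eqP; rewrite -addr_eq0 addrC z0.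
  - rewrite QD hQZ BZ b12 mulr0 addr0 expr2 hx divfK //; ring.
  - move=> l lL; rewrite BD BZ hv1 // hv2 ?mulr0 ?addr0 //; by rewrite inE lL orbT.
have [v2 [hv2 v20]] := DL0 hlin (L := v1 :: L) ltac:(rewrite /=; lia).
have [b0|b0] := eqVneq (Q v2) 0.
  by exists v2; split=> // l lL; apply: hv2; rewrite inE lL orbT.
have [v3 [hv3 v30]] := DL0 hlin (L := v2 :: v1 :: L) ltac:(rewrite /=; lia).
have [c0|c0] := eqVneq (Q v3) 0.
  by exists v3; split=> // l lL; apply: hv3; rewrite !inE lL !orbT.
have [x [y hxy]] := sq_pigeon (Q v3) a0 b0.
have b21 : B v2 v1 = 0 by apply: hv2; rewrite inE eqxx.
have b31 : B v3 v1 = 0 by apply: hv3; rewrite !inE eqxx orbT.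
have b32 : B v3 v2 = 0 by apply: hv3; rewrite !inE eqxx.
exists (x *: v1 + (y *: v2 + v3)); split.
- apply/eqP=> z0.
  have : B (x *: v1 + (y *: v2 + v3)) v3 = 0 by rewrite z0 (B0l hlin).
  rewrite !BD !BZ Bvv (hsymm v1) (hsymm v2) b31 b32 !mulr0 !add0r => /eqP.
  by rewrite mulf_eq0 (negbTE two0) (negbTE c0).
- rewrite !QD !hQZ !BZ (hsymm v2) b32 (hsymm v1) BD BZ b21 b31 !mulr0 !addr0.
  by rewrite !expr2 mulr0 addr0 (mulrC (x * x)) (mulrC (y * y)) addrA.
- move=> l lL; rewrite !BD !BZ hv1 // hv2 ?hv3 ?mulr0 ?addr0 //; by rewrite !inE lL !orbT.
Qed.
End Orthogonal.

Section Final.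
Variables (F : finFieldType) (n : nat) (k : form_kind) (B : 'rV[F]_n -> 'rV[F]_n -> F) (Q : 'rV[F]_n -> F).
Local Notation V := 'rV[F]_n.
Local Notation X := (Xpts k B Q).
Hypothesis hlin : bilinear_l B.
Hypothesis hsym0 : forall u v, B u v = 0 -> B v u = 0.
Hypothesis hnd : nondeg_form B.
Hypothesis hiso : forall z, iso k B Q z -> B z z = 0.

Lemma from_isoex (G : {set {perm {set V}}}) : G \subset Hset k B Q ->
  (forall L : seq V, (size L <= 2)%N ->
     exists z, [/\ z != 0, iso k B Q z & forall l, l \in L -> B z l = 0]) ->
  orbital_diam_ge G X 3.
Proof.
move=> sGH isoex.
have [e1 [e10 ie1 _]] := isoex [::] isT.
have [f1 hf1] := nd_witness hsym0 hnd e10.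
have [e2 [e20 ie2 he2]] := isoex [:: e1; f1] isT.
apply: (assemble hlin hsym0 hnd hiso sGH e10 ie1 hf1 e20 ie2).
  by apply: he2; rewrite inE eqxx.
by apply: he2; rewrite !inE eqxx orbT.
Qed.

Lemma from_W (G : {set {perm {set V}}}) (W : {set V}) : G \subset Hset k B Q ->
  is_2space W -> (forall v, v \in W -> iso k B Q v) ->
  (forall u v, u \in W -> v \in W -> B u v = 0) ->
  orbital_diam_ge G X 3.
Proof.
move=> sGH W2 isoW BW.
have sW : is_subspace W by case/andP: W2.
have cW : #|W| = (#|F| ^ 2)%N by case/andP: W2 => _ /eqP.
have F1 := finNzRing_gt1 F.
have [e1 e1W e10] : exists2 e1, e1 \in W & e1 != 0.
  have : ~~ (W \subset [set 0 : V]).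
    apply/negP=> /subset_leq_card; rewrite cards1 cW.
    by rewrite -(exp1n 2) leq_exp2r // leqNgt F1.
  case/subsetPn=> e1 e1W; rewrite inE => e10; by exists e1.
have [e' e'W e'n] : exists2 e', e' \in W & e' \notin [set c *: e1 | c : F].
  have : ~~ (W \subset [set c *: e1 | c : F]).
    apply/negP=> /subset_leq_card; rewrite cW.
    have h1 : (#|[set c *: e1 | c : F]| <= #|F|)%N.
      by apply: leq_trans (leq_imset_card _ _) _; apply: max_card.
    move=> h2.
    have := leq_trans h2 h1; rewrite expnS expn1 => h3.
    have := @leq_pmul2l #|F| #|F| 1%N (ltnW F1); rewrite muln1 => h4.
    by move: F1; rewrite ltnNge -h4 h3.
  case/subsetPn=> e' e'W e'n; by exists e'.
have [f1 hf1] := nd_witness hsym0 hnd e10.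
have hf1' := Bnz hsym0 hf1.
set e2 := B e' f1 *: e1 + (- B e1 f1) *: e'.
have e2W : e2 \in W by apply: subsp_comb.
have BD := BDl hlin; have BZ := BZl hlin.
have e1W' : e2 + e1 \in W.
  by have := subsp_comb 1 1 sW e2W e1W; rewrite !scale1r.
apply: (assemble hlin hsym0 hnd hiso sGH e10 (isoW _ e1W) hf1 _ (isoW _ e2W)).
- apply/eqP=> e20; move: e'n; apply/negP/negPn.
  apply/imsetP; exists (B e' f1 / B e1 f1); first by rewrite inE.
  apply: (scalerI hf1'); rewrite scalerA mulrC divfK //.
  by move/eqP: e20; rewrite /e2 scaleNr addr_eq0 opprK => /eqP ->.
- by apply: BW.
- by rewrite /e2 BD !BZ; ring.
Qed.
End Final.

Local Close Scope ring_scope.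

Theorem mainTheorem13 (F : finFieldType) (n : nat) (k : form_kind)
  (sigma : F -> F) (B : 'rV[F]_n -> 'rV[F]_n -> F) (Q : 'rV[F]_n -> F)
  (G : {group {perm {set 'rV[F]_n}}}) :
  (4 <= n)%N ->
  formed_space k sigma B Q ->
  (* (n, epsilon) <> (4, -) : for n = 4 the quadratic form has Witt index 2 *)
  (k = Orth -> n = 4 ->
     exists W : {set 'rV[F]_n}, is_2space W /\ totally_singular Q W) ->
  (* G is almost simple with socle G_0 = PSp_n(q), PSU_n(q) or POmega_n(q),
     acting on X as a subgroup of P Gamma *)
  G \subset PGam k B Q ->
  (Socle0 k B Q <| G)%g ->
  simple (Socle0 k B Q) ->
  ~~ abelian (Socle0 k B Q) ->
  ('C_G(Socle0 k B Q))%g = 1%g ->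
  [primitive G, on Xpts k B Q | 'P] ->
  orbital_diam_ge G (Xpts k B Q) 3.
Proof.
move=> hn fs hW sub _ _ _ _ _.
have sGH : G \subset Hset k B Q := subset_trans sub (PGam_H k B Q).
case: k fs hW sub sGH => fs hW sub sGH.
-
  case: fs => hlin [hanti [halt hnd]].
  have hsym0 : forall u v, (B u v = 0 -> B v u = 0)%R.
    by move=> u v h; rewrite hanti h oppr0.
  have hiso : forall z, iso Symp B Q z -> (B z z = 0)%R by move=> z _; apply: halt.
  apply: (from_isoex hlin hsym0 hnd hiso sGH).
  move=> L hL; have [z [hz z0]] := DL0 hlin (L := L) ltac:(lia).
  by exists z; split=> //; rewrite /iso /= halt.
-
  case: fs => sD [sM [s1 [ss [snt [hlin [herm hnd]]]]]].
  have hsym0 := herm0 sD herm.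
  have hiso : forall z, iso Unit B Q z -> (B z z = 0)%R by move=> z /eqP.
  apply: (from_isoex hlin hsym0 hnd hiso sGH).
  move=> L hL; have [z [z0 zz hz]] := unit_iso sD sM s1 ss snt hlin herm hn hL.
  by exists z; split=> //; rewrite /iso /= zz.
-
  case: fs => hQZ [hpol [hlin [hsymm hnd]]].
  have hsym0 : forall u v, (B u v = 0 -> B v u = 0)%R by move=> u v; rewrite hsymm.
  have hiso : forall z, iso Orth B Q z -> (B z z = 0)%R.
    by move=> z /eqP qz; rewrite (Bvv hQZ hpol) qz mulr0.
  have [n4|n5] : n = 4 \/ (5 <= n)%N by lia.
    have [W [W2 tW]] := hW erefl n4.
    apply: (from_W hlin hsym0 hnd hiso sGH W2).
      by move=> v vW; move/forall_inP: tW => /(_ v vW).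
    move=> u v uW vW; rewrite hpol.
    have uvW : (u + v)%R \in W by have := subsp_comb 1%R 1%R (andP W2).1 uW vW; rewrite !scale1r.
    move/forall_inP: tW => tW.
    by rewrite (eqP (tW _ uvW)) (eqP (tW _ uW)) (eqP (tW _ vW)) !subr0.
  apply: (from_isoex hlin hsym0 hnd hiso sGH).
  move=> L hL; have [z [z0 zz hz]] := orth_iso hQZ hpol hlin hsymm n5 hL.
  by exists z; split=> //; rewrite /iso /= zz.
Qed.
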